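(* Let $N\in\mathbb N$, $\alpha,\beta>-1$, let $x_0<\dots<x_N$ be the Jacobi–Gauss–Lobatto (JGL) nodes and $h_0,\dots,h_N$ the associated Lagrange basis polynomials. For every $\mu>0$ and every $u\in\mathcal P_N$ one has $\hat I_-^\mu u\in\mathcal P_N$ and ${}^R\hat D_-^\mu u\in\mathcal P_N$ (after continuous extension to $x=-1$). Moreover $$ {}_0\mathcal P_N=\operatorname{span}\{\hat I_-^\mu h_j:\ 1\le j\le N\}. $$
   Context: For $\rho>0$ and $x\in(-1,1)$, $(I_-^\rho u)(x)=\frac{1}{\Gamma(\rho)}\int_{-1}^x (x-y)^{\rho-1}u(y)\,dy$, and $D^k=d^k/dx^k$. For $\mu\in(k-1,k)$, $k\in\mathbb N$, the Riemann–Liouville derivative is ${}^R D_-^\mu u=D^k(I_-^{k-\mu}u)$. The modified operators are $\hat I_-^\mu u=(1+x)^{-\mu}I_-^\mu u$ and ${}^R\hat D_-^\mu u=(1+x)^{\mu}\,{}^R D_-^\mu u$. $\mathcal P_N$ denotes polynomials of degree $\le N$ and ${}_0\mathcal P_N=\{\phi\in\mathcal P_N:\phi(-1)=0\}$. Jacobi polynomials $P_n^{(\alpha,\beta)}$ are in Szegő's normalization. The JGL nodes $x_0<x_1<\dots<x_N$ are the zeros of $(1-x^2)\frac{d}{dx}P_N^{(\alpha,\beta)}(x)$ (so $x_0=-1$, $x_N=1$), and $h_j\in\mathcal P_N$ is the Lagrange basis polynomial with $h_j(x_i)=\delta_{ij}$, $0\le i,j\le N$. *)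

(* Defs.v *)
From Stdlib Require Import Arith Reals ClassicalEpsilon.
Open Scope R_scope.

Definition poly_deg_le (N : nat) (f : R -> R) : Prop :=
  exists c : nat -> R, forall x, f x = sum_f_R0 (fun i => c i * x ^ i) N.

Fixpoint falling (z : R) (m : nat) : R :=
  match m with
  | O => 1
  | S m' => falling z m' * (z - INR m')
  end.
Definition gbinom (z : R) (m : nat) : R := falling z m / INR (fact m).

(* Jacobi polynomial in Szego's normalization (Szego (4.3.2)). *)
Definition jacobiP (n : nat) (a b : R) (x : R) : R :=
  sum_f_R0 (fun s => gbinom (INR n + a) (n - s) * gbinom (INR n + b) s
                     * ((x - 1) / 2) ^ s * ((x + 1) / 2) ^ (n - s)) n.

Definition improper_int_to (f : R -> R) (a b l : R) : Prop :=
  forall eps, 0 < eps -> exists delta, 0 < delta /\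
    forall t, a < t -> b - delta < t < b ->
      exists pr : Riemann_integrable f a t, Rabs (RiemannInt pr - l) < eps.

Definition improper_int (f : R -> R) (a b : R) : R :=
  epsilon (inhabits 0) (improper_int_to f a b).

Definition Gamma_is (r g : R) : Prop :=
  forall eps, 0 < eps -> exists delta, 0 < delta /\ exists M, forall a b,
    0 < a < delta -> M < b ->
    exists pr : Riemann_integrable (fun t => Rpower t (r - 1) * exp (- t)) a b,
      Rabs (RiemannInt pr - g) < eps.

Definition Gamma (r : R) : R := epsilon (inhabits 0) (Gamma_is r).

Definition I_minus (r : R) (u : R -> R) (x : R) : R :=
  / Gamma r * improper_int (fun y => Rpower (x - y) (r - 1) * u y) (-1) x.

Definition Ihat (mu : R) (u : R -> R) (x : R) : R :=
  Rpower (1 + x) (- mu) * I_minus mu u x.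

Fixpoint has_nth_deriv_on (k : nat) (f g : R -> R) : Prop :=
  match k with
  | O => forall x, -1 < x < 1 -> f x = g x
  | S k' => exists f' : R -> R,
      (forall x, -1 < x < 1 -> derivable_pt_lim f x (f' x)) /\
      has_nth_deriv_on k' f' g
  end.

(* Main.v *)
Require Import Defs.
From Stdlib Require Import Reals ClassicalEpsilon.
From Stdlib Require Import Lia Lra FunctionalExtensionality.
From Coquelicot Require Import Coquelicot.
Open Scope R_scope.


Lemma PD_ext n f g : (forall y, f y = g y) -> poly_deg_le n f -> poly_deg_le n g.
Proof. intros H [c Hc]; exists c; intro y; rewrite <- H; auto. Qed.

Lemma PD_S n f : poly_deg_le n f -> poly_deg_le (S n) f.
Proof.
  intros [c Hc]. exists (fun i => if Nat.eqb i (S n) then 0 else c i).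
  intro y. simpl. rewrite Nat.eqb_refl. rewrite Hc.
  rewrite Rmult_0_l, Rplus_0_r. apply sum_eq. intros i Hi.
  destruct (Nat.eqb_spec i (S n)); [lia|reflexivity].
Qed.

Lemma PD_le n m f : (n <= m)%nat -> poly_deg_le n f -> poly_deg_le m f.
Proof. induction 1; auto using PD_S. Qed.

Lemma PD_plus n f g : poly_deg_le n f -> poly_deg_le n g ->
  poly_deg_le n (fun y => f y + g y).
Proof.
  intros [c Hc] [d Hd]. exists (fun i => c i + d i). intro y.
  rewrite Hc, Hd, <- plus_sum. apply sum_eq. intros; ring.
Qed.

Lemma PD_scal n a f : poly_deg_le n f -> poly_deg_le n (fun y => a * f y).
Proof.
  intros [c Hc]. exists (fun i => a * c i). intro y.
  rewrite Hc, scal_sum. apply sum_eq. intros; ring.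
Qed.

Lemma sum_first0 (d : nat -> R) n : sum_f_R0 (fun m => d m * 0 ^ m) n = d 0%nat.
Proof.
  induction n; simpl; [ring|]. rewrite IHn. ring.
Qed.

Lemma PD_const n a : poly_deg_le n (fun _ => a).
Proof.
  apply (PD_le 0); [lia|]. exists (fun _ => a). intro; simpl; ring.
Qed.

Lemma PD_mulX n f : poly_deg_le n f -> poly_deg_le (S n) (fun y => y * f y).
Proof.
  intros [c Hc]. exists (fun i => match i with O => 0 | S k => c k end).
  intro y. rewrite (decomp_sum _ (S n)) by lia. simpl pred.
  rewrite Hc, scal_sum. simpl. rewrite Rmult_0_l, Rplus_0_l.
  apply sum_eq. intros; ring.
Qed.

Lemma PD_sum n k (F : nat -> R -> R) :
  (forall i, (i <= k)%nat -> poly_deg_le n (F i)) ->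
  poly_deg_le n (fun y => sum_f_R0 (fun i => F i y) k).
Proof.
  induction k; intros H; simpl.
  - apply H; lia.
  - apply PD_plus; [apply IHk; intros; apply H; lia| apply H; lia].
Qed.

Lemma PD_powX n : poly_deg_le n (fun y => y ^ n).
Proof.
  induction n.
  - apply PD_ext with (fun _ => 1). intros; simpl; ring. apply PD_const.
  - apply (PD_mulX _ _ IHn).
Qed.

Lemma PD_pow_shift a i : poly_deg_le i (fun y => (y + a) ^ i).
Proof.
  induction i.
  - apply PD_ext with (fun _ => 1). intros; simpl; ring. apply PD_const.
  - simpl. apply PD_ext with (fun y => y * (y + a) ^ i + a * (y+a)^i).
    + intros; ring.
    + apply PD_plus. apply PD_mulX; auto. apply PD_S, PD_scal; auto.
Qed.

Lemma PD_shift n a f : poly_deg_le n f -> poly_deg_le n (fun y => f (y + a)).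
Proof.
  intros [c Hc]. apply PD_ext with (fun y => sum_f_R0 (fun i => c i * (y + a) ^ i) n).
  - intros; rewrite Hc; auto.
  - apply PD_sum. intros i Hi. apply PD_scal. apply (PD_le i); auto. apply PD_pow_shift.
Qed.

Definition SP (n : nat) (f : R -> R) : Prop :=
  exists d : nat -> R, forall y, f y = sum_f_R0 (fun m => d m * (1 + y) ^ m) n.

Lemma PD_SP n f : poly_deg_le n f -> SP n f.
Proof.
  intros H. destruct (PD_shift n (-1) f H) as [d Hd]. exists d. intro y.
  rewrite <- Hd. f_equal. ring.
Qed.

Lemma SP_PD n f : SP n f -> poly_deg_le n f.
Proof.
  intros [d Hd]. apply PD_ext with (fun y => sum_f_R0 (fun m => d m * (y + 1) ^ m) n).
  - intros; rewrite Hd. apply sum_eq; intros; rewrite (Rplus_comm y); auto.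
  - apply (PD_shift n 1 (fun y => sum_f_R0 (fun m => d m * y ^ m) n)). exists d; auto.
Qed.

Definition Qf (a : R) (k : nat) (y : R) := sum_f_R0 (fun j => y ^ j * a ^ (k - j)) k.

Lemma Qf_PD a k : poly_deg_le k (Qf a k).
Proof.
  unfold Qf. apply PD_sum. intros i Hi.
  apply PD_ext with (fun y => a ^ (k - i) * y ^ i). intros; ring.
  apply PD_scal. apply (PD_le i); auto. apply PD_powX.
Qed.

Lemma Qf_eq a k y : (y - a) * Qf a k y = y ^ (S k) - a ^ (S k).
Proof.
  unfold Qf. induction k.
  - simpl. ring.
  - rewrite tech5. rewrite Nat.sub_diag.
    replace (sum_f_R0 (fun j => y ^ j * a ^ (S k - j)) k)
      with (a * sum_f_R0 (fun j => y ^ j * a ^ (k - j)) k).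
    + replace ((y - a) * (a * sum_f_R0 (fun j => y ^ j * a ^ (k - j)) k + y ^ S k * a ^ 0))
        with (a * ((y - a) * sum_f_R0 (fun j => y ^ j * a ^ (k - j)) k) + (y - a) * y ^ S k)
        by (simpl; ring).
      rewrite IHk. simpl. ring.
    + rewrite scal_sum. apply sum_eq. intros i Hi.
      replace (S k - i)%nat with (S (k - i)) by lia. simpl. ring.
Qed.

Lemma factor n p a : poly_deg_le (S n) p -> p a = 0 ->
  exists q, poly_deg_le n q /\ forall y, p y = (y - a) * q y.
Proof.
  intros [c Hc] Ha.
  exists (fun y => sum_f_R0 (fun k => c (S k) * Qf a k y) n). split.
  - apply PD_sum. intros i Hi. apply PD_scal. apply (PD_le i); auto. apply Qf_PD.
  - intro y. replace (p y) with (p y - p a) by (rewrite Ha; ring).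
    rewrite !Hc, <- minus_sum. rewrite (decomp_sum _ (S n)) by lia. simpl pred.
    rewrite scal_sum. simpl. rewrite Rminus_diag, Rplus_0_l.
    apply sum_eq. intros i Hi. pose proof (Qf_eq a i y) as E; simpl in E. rewrite Rmult_assoc, (Rmult_comm (Qf a i y)), E. ring.
Qed.

Lemma roots_zero n : forall p (z : nat -> R),
  poly_deg_le n p -> (forall i, (i <= n)%nat -> p (z i) = 0) ->
  (forall i j, (i <= n)%nat -> (j <= n)%nat -> i <> j -> z i <> z j) ->
  forall y, p y = 0.
Proof.
  induction n; intros p z Hp Hr Hd y.
  - destruct Hp as [c Hc]. rewrite Hc. rewrite <- (Hr 0%nat) by lia. rewrite Hc. reflexivity.
  - destruct (factor n p (z (S n)) Hp (Hr (S n) (le_n _))) as [q [Hq Hpq]].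
    assert (forall y, q y = 0).
    { apply (IHn q z Hq).
      - intros i Hi. specialize (Hr i ltac:(lia)). rewrite Hpq in Hr.
        apply Rmult_integral in Hr. destruct Hr as [Hr|Hr]; auto.
        exfalso. apply (Hd i (S n)); try lia. lra.
      - intros; apply Hd; lia. }
    rewrite Hpq, H. ring.
Qed.

Lemma RI_minus f g a b l1 l2 : is_RInt f a b l1 -> is_RInt g a b l2 ->
  is_RInt (fun y => f y - g y) a b (l1 - l2).
Proof. intros H1 H2. exact (is_RInt_minus _ _ _ _ _ _ H1 H2). Qed.
Lemma RI_plus f g a b l1 l2 : is_RInt f a b l1 -> is_RInt g a b l2 ->
  is_RInt (fun y => f y + g y) a b (l1 + l2).
Proof. intros H1 H2. exact (is_RInt_plus _ _ _ _ _ _ H1 H2). Qed.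
Lemma RI_scal f a b k l : is_RInt f a b l ->
  is_RInt (fun y => k * f y) a b (k * l).
Proof. intros H1. exact (is_RInt_scal _ _ _ _ _ H1). Qed.

Lemma Rpower_pos a b : 0 < Rpower a b.
Proof. unfold Rpower; apply exp_pos. Qed.

Lemma D_Rp x y s : y < x ->
  derivable_pt_lim (fun y => Rpower (x - y) s) y (- s * Rpower (x - y) (s - 1)).
Proof.
  intros H.
  assert (H1 : derivable_pt_lim (fun y => x - y) y (-1)).
  { replace (-1) with (0 - 1) by ring. apply derivable_pt_lim_minus.
    apply derivable_pt_lim_const. apply derivable_pt_lim_id. }
  pose proof (derivable_pt_lim_comp (fun y => x - y) (fun z => Rpower z s) y _ _ H1
    (derivable_pt_lim_power (x - y) s ltac:(lra))) as H2.
  unfold comp in H2. replace (- s * Rpower (x - y) (s - 1)) with (s * Rpower (x - y) (s - 1) * -1) by ring.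
  exact H2.
Qed.

Lemma L1 x a t s : a < t < x -> 0 < s ->
  is_RInt (fun y => Rpower (x - y) (s - 1)) a t ((Rpower (x - a) s - Rpower (x - t) s) / s).
Proof.
  intros Ht Hs.
  assert (E : (Rpower (x - a) s - Rpower (x - t) s) / s
     = (fun y => - Rpower (x - y) s / s) t - (fun y => - Rpower (x - y) s / s) a)
    by (simpl; field; lra).
  rewrite E. apply (is_RInt_derive (fun y => - Rpower (x - y) s / s)).
  - intros y Hy. rewrite Rmin_left, Rmax_right in Hy by lra.
    apply is_derive_Reals.
    replace (Rpower (x - y) (s - 1)) with ((-1/s) * (- s * Rpower (x - y) (s - 1))) by (field; lra).
    apply derivable_pt_lim_ext with (fun y => (-1/s) * Rpower (x - y) s).
    { intros; field; lra. }
    apply (derivable_pt_lim_scal (fun y => Rpower (x - y) s) (-1/s)). apply D_Rp. lra.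
  - intros y Hy. rewrite Rmin_left, Rmax_right in Hy by lra.
    apply (@ex_derive_continuous R_AbsRing R_NormedModule). exists (- (s - 1) * Rpower (x - y) (s - 1 - 1)).
    apply is_derive_Reals. apply D_Rp. lra.
Qed.

Fixpoint Sc (m : nat) (r : R) : R :=
  match m with O => / r | S m' => Sc m' r - Sc m' (r + 1) end.

Lemma Rpower_plus1 a b : 0 < a -> Rpower a (b + 1) = Rpower a b * a.
Proof. intros; rewrite Rpower_plus, Rpower_1; auto. Qed.

Lemma INT_aux x : -1 < x -> forall m r, 0 < r -> exists K, forall t, -1 < t < x ->
  exists E, is_RInt (fun y => Rpower (x - y) (r - 1) * (1 + y) ^ m) (-1) t
      (Sc m r * Rpower (1 + x) (r + INR m) - E) /\ Rabs E <= K * Rpower (x - t) r.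
Proof.
  intros Hx m. induction m; intros r Hr.
  - exists (/ r). intros t Ht. exists (Rpower (x - t) r / r). split.
    + apply is_RInt_ext with (fun y => Rpower (x - y) (r - 1)).
      { intros; simpl; ring. }
      replace (Sc 0 r * Rpower (1 + x) (r + INR 0) - Rpower (x - t) r / r)
        with ((Rpower (x - -1) r - Rpower (x - t) r) / r).
      apply L1; lra.
      simpl. replace (x - -1) with (1 + x) by ring. rewrite Rplus_0_r. field; lra.
    + rewrite Rabs_right. unfold Rdiv; rewrite Rmult_comm; lra.
      pose proof (Rpower_pos (x - t) r). apply Rle_ge. apply Rmult_le_pos; [lra|].
      left; apply Rinv_0_lt_compat; lra.
  - destruct (IHm r Hr) as [K1 H1]. destruct (IHm (r + 1) ltac:(lra)) as [K2 H2].
    exists ((1 + x) * (K1 + K2)). intros t Ht.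
    destruct (H1 t Ht) as [E1 [I1 B1]]. destruct (H2 t Ht) as [E2 [I2 B2]].
    exists ((1 + x) * E1 - E2). split.
    + apply is_RInt_ext with (fun y => (1 + x) * (Rpower (x - y) (r - 1) * (1 + y) ^ m)
                                     - Rpower (x - y) (r + 1 - 1) * (1 + y) ^ m).
      { intros y Hy. rewrite Rmin_left, Rmax_right in Hy by lra.
        replace (r + 1 - 1) with (r - 1 + 1) by ring. rewrite Rpower_plus1 by lra.
        simpl. ring. }
      replace (Sc (S m) r * Rpower (1 + x) (r + INR (S m)) - ((1 + x) * E1 - E2))
        with ((1 + x) * (Sc m r * Rpower (1 + x) (r + INR m) - E1)
              - (Sc m (r + 1) * Rpower (1 + x) (r + 1 + INR m) - E2)).
      apply RI_minus; [apply RI_scal|]; auto.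
      rewrite S_INR. replace (r + (INR m + 1)) with (r + INR m + 1) by ring.
      replace (r + 1 + INR m) with (r + INR m + 1) by ring.
      rewrite Rpower_plus1 by lra. simpl. ring.
    + pose proof (Rpower_pos (x - t) r) as P.
      assert (Rpower (x - t) (r + 1) <= Rpower (x - t) r * (1 + x)).
      { rewrite Rpower_plus1 by lra. apply Rmult_le_compat_l; lra. }
      unfold Rminus. eapply Rle_trans; [apply Rabs_triang|].
      rewrite Rabs_Ropp, Rabs_mult, (Rabs_right (1 + x)) by lra.
      assert (0 <= K2) by (eapply Rmult_le_reg_r with (Rpower (x - t) (r + 1)); [apply Rpower_pos|];
        rewrite Rmult_0_l; eapply Rle_trans; [apply Rabs_pos|eauto]).
      assert (K2 * Rpower (x - t) (r + 1) <= K2 * (Rpower (x - t) r * (1 + x))) by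
        (apply Rmult_le_compat_l; auto).
      assert ((1 + x) * Rabs E1 <= (1 + x) * (K1 * Rpower (x - t) r)) by
        (apply Rmult_le_compat_l; lra).
      change (x + - t) with (x - t).
      replace ((1 + x) * (K1 + K2) * Rpower (x - t) r) with
        ((1 + x) * (K1 * Rpower (x - t) r) + K2 * (Rpower (x - t) r * (1 + x))) by ring.
      lra.
Qed.

Definition imp (f : R -> R) (a b l : R) : Prop :=
  forall eps, 0 < eps -> exists delta, 0 < delta /\
    forall t, a < t -> b - delta < t < b -> exists v, is_RInt f a t v /\ Rabs (v - l) < eps.

Lemma INT x m r : -1 < x -> 0 < r ->
  imp (fun y => Rpower (x - y) (r - 1) * (1 + y) ^ m) (-1) x
      (Sc m r * Rpower (1 + x) (r + INR m)).
Proof.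
  intros Hx Hr. destruct (INT_aux x Hx m r Hr) as [K HK].
  intros eps He. set (e' := eps / (Rabs K + 1)).
  assert (He' : 0 < e') by (unfold e'; apply Rdiv_lt_0_compat; [lra| pose proof (Rabs_pos K); lra]).
  exists (Rpower e' (/ r)). split; [apply Rpower_pos|].
  intros t Ht1 Ht2. destruct (HK t ltac:(lra)) as [E [I B]].
  exists (Sc m r * Rpower (1 + x) (r + INR m) - E). split; auto.
  replace (Sc m r * Rpower (1 + x) (r + INR m) - E - Sc m r * Rpower (1 + x) (r + INR m))
    with (- E) by ring. rewrite Rabs_Ropp.
  assert (Rpower (x - t) r < e').
  { replace e' with (Rpower (Rpower e' (/ r)) r).
    apply Rlt_Rpower_l; auto; lra.
    rewrite Rpower_mult, Rinv_l, Rpower_1; auto; lra. }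
  pose proof (Rpower_pos (x - t) r).
  assert (K * Rpower (x - t) r <= Rabs K * e').
  { eapply Rle_trans; [apply Rmult_le_compat_r; [lra|apply Rle_abs]|].
    apply Rmult_le_compat_l; [apply Rabs_pos|lra]. }
  assert (Rabs K * e' < eps).
  { unfold e'. pose proof (Rabs_pos K).
    apply Rmult_lt_reg_r with (Rabs K + 1); [lra|].
    unfold Rdiv. rewrite Rmult_assoc, Rmult_assoc, Rinv_l by lra. nra. }
  lra.
Qed.

Lemma imp_plus f g a b l1 l2 : imp f a b l1 -> imp g a b l2 ->
  imp (fun y => f y + g y) a b (l1 + l2).
Proof.
  intros H1 H2 eps He. destruct (H1 (eps/2) ltac:(lra)) as [d1 [Hd1 K1]].
  destruct (H2 (eps/2) ltac:(lra)) as [d2 [Hd2 K2]].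
  exists (Rmin d1 d2). split; [apply Rmin_pos; auto|].
  intros t Ht1 Ht2. pose proof (Rmin_l d1 d2). pose proof (Rmin_r d1 d2).
  destruct (K1 t Ht1 ltac:(lra)) as [v1 [I1 B1]]. destruct (K2 t Ht1 ltac:(lra)) as [v2 [I2 B2]].
  exists (v1 + v2). split. apply RI_plus; auto.
  replace (v1 + v2 - (l1 + l2)) with ((v1 - l1) + (v2 - l2)) by ring.
  eapply Rle_lt_trans; [apply Rabs_triang|lra].
Qed.

Lemma imp_scal f a b c l : imp f a b l -> imp (fun y => c * f y) a b (c * l).
Proof.
  intros H eps He. pose proof (Rabs_pos c).
  destruct (H (eps / (Rabs c + 1))) as [d [Hd K]].
  { apply Rdiv_lt_0_compat; lra. }
  exists d; split; auto. intros t Ht1 Ht2. destruct (K t Ht1 Ht2) as [v [I B]].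
  exists (c * v). split. apply RI_scal; auto.
  rewrite <- Rmult_minus_distr_l, Rabs_mult.
  apply Rle_lt_trans with (Rabs c * (eps / (Rabs c + 1))).
  apply Rmult_le_compat_l; lra.
  apply Rmult_lt_reg_r with (Rabs c + 1); [lra|].
  unfold Rdiv. rewrite Rmult_assoc, Rmult_assoc, Rinv_l by lra. nra.
Qed.

Lemma imp_sum (F : nat -> R -> R) (L : nat -> R) a b n :
  (forall i, (i <= n)%nat -> imp (F i) a b (L i)) ->
  imp (fun y => sum_f_R0 (fun i => F i y) n) a b (sum_f_R0 L n).
Proof.
  induction n; intros H; simpl.
  - apply H; lia.
  - apply imp_plus. apply IHn; intros; apply H; lia. apply H; lia.
Qed.

Lemma imp_improper f a b l : a < b -> imp f a b l -> improper_int_to f a b l.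
Proof.
  intros Hab H eps He. destruct (H eps He) as [d [Hd K]]. exists d; split; auto.
  intros t Ht1 Ht2. destruct (K t Ht1 Ht2) as [v [I B]].
  assert (Ex : ex_RInt f a t) by (exists v; auto).
  exists (ex_RInt_Reals_0 _ _ _ Ex).
  rewrite <- RInt_Reals. rewrite (is_RInt_unique _ _ _ _ I). auto.
Qed.

Lemma improper_unique f a b l1 l2 : a < b -> improper_int_to f a b l1 ->
  improper_int_to f a b l2 -> l1 = l2.
Proof.
  intros Hab H1 H2. destruct (Req_dec l1 l2) as [|Hn]; auto. exfalso.
  set (e := Rabs (l1 - l2) / 2).
  assert (He : 0 < e) by (unfold e; apply Rdiv_lt_0_compat; [apply Rabs_pos_lt; lra|lra]).
  destruct (H1 e He) as [d1 [Hd1 K1]]. destruct (H2 e He) as [d2 [Hd2 K2]].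
  set (d := Rmin (Rmin d1 d2) (b - a)).
  assert (0 < d) by (unfold d; repeat apply Rmin_pos; lra).
  assert (d <= d1 /\ d <= d2 /\ d <= b - a).
  { unfold d. pose proof (Rmin_l (Rmin d1 d2) (b - a)). pose proof (Rmin_r (Rmin d1 d2) (b - a)).
    pose proof (Rmin_l d1 d2). pose proof (Rmin_r d1 d2). lra. }
  destruct (K1 (b - d / 2) ltac:(lra) ltac:(lra)) as [p1 B1].
  destruct (K2 (b - d / 2) ltac:(lra) ltac:(lra)) as [p2 B2].
  rewrite (RiemannInt_P5 p2 p1) in B2.
  assert (Rabs (l1 - l2) <= Rabs (RiemannInt p1 - l1) + Rabs (RiemannInt p1 - l2)).
  { replace (l1 - l2) with (-(RiemannInt p1 - l1) + (RiemannInt p1 - l2)) by ring.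
    eapply Rle_trans; [apply Rabs_triang|]. rewrite Rabs_Ropp; lra. }
  unfold e in *. lra.
Qed.

Lemma improper_int_eq f a b l : a < b -> improper_int_to f a b l -> improper_int f a b = l.
Proof.
  intros Hab H. unfold improper_int.
  apply (improper_unique f a b); auto.
  apply epsilon_spec. exists l; auto.
Qed.

Lemma Imin_eval r u d n x : 0 < r -> -1 < x ->
  (forall y, u y = sum_f_R0 (fun m => d m * (1 + y) ^ m) n) ->
  I_minus r u x = / Gamma r * sum_f_R0 (fun m => d m * (Sc m r * Rpower (1 + x) (r + INR m))) n.
Proof.
  intros Hr Hx Hu. unfold I_minus. f_equal.
  apply improper_int_eq; [lra|]. apply imp_improper; [lra|].
  replace (fun y => Rpower (x - y) (r - 1) * u y) with
    (fun y => sum_f_R0 (fun m => d m * (Rpower (x - y) (r - 1) * (1 + y) ^ m)) n).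
  - apply imp_sum. intros i Hi. apply imp_scal. apply INT; auto.
  - apply functional_extensionality. intro y. rewrite Hu, scal_sum. apply sum_eq. intros; ring.
Qed.

Lemma Ihat_eval mu u d n x : 0 < mu -> -1 < x ->
  (forall y, u y = sum_f_R0 (fun m => d m * (1 + y) ^ m) n) ->
  Ihat mu u x = sum_f_R0 (fun m => (d m * Sc m mu / Gamma mu) * (1 + x) ^ m) n.
Proof.
  intros Hm Hx Hu. unfold Ihat. rewrite (Imin_eval mu u d n x Hm Hx Hu).
  rewrite <- Rmult_assoc, scal_sum. apply sum_eq. intros i Hi.
  rewrite Rpower_plus, Rpower_pow by lra.
  rewrite Rpower_Ropp. pose proof (Rpower_pos (1 + x) mu).
  unfold Rdiv.
  transitivity ((/ Rpower (1 + x) mu * Rpower (1 + x) mu) * (d i * Sc i mu * / Gamma mu * (1 + x) ^ i)).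
  ring. rewrite Rinv_l by lra. ring.
Qed.

Lemma loc_deriv f F y l : (forall z, -1 < z < 1 -> f z = F z) -> -1 < y < 1 ->
  derivable_pt_lim F y l -> derivable_pt_lim f y l.
Proof.
  intros Hf Hy H eps He. destruct (H eps He) as [d Hd].
  assert (Hp : 0 < Rmin d (Rmin (y + 1) (1 - y))).
  { apply Rmin_pos. apply cond_pos. apply Rmin_pos; lra. }
  exists (mkposreal _ Hp). intros h Hh Hlt. simpl in Hlt.
  pose proof (Rmin_l d (Rmin (y + 1) (1 - y))). pose proof (Rmin_r d (Rmin (y + 1) (1 - y))).
  pose proof (Rmin_l (y + 1) (1 - y)). pose proof (Rmin_r (y + 1) (1 - y)).
  rewrite (Hf y Hy), (Hf (y + h)).
  apply Hd; auto; lra.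
  apply Rabs_def2 in Hlt. lra.
Qed.

Lemma deriv_sum (G G' : nat -> R -> R) y n :
  (forall m, (m <= n)%nat -> derivable_pt_lim (G m) y (G' m y)) ->
  derivable_pt_lim (fun z => sum_f_R0 (fun m => G m z) n) y (sum_f_R0 (fun m => G' m y) n).
Proof.
  induction n; intros H; simpl.
  - apply H; lia.
  - apply (derivable_pt_lim_plus (fun z => sum_f_R0 (fun m => G m z) n) (G (S n))).
    apply IHn; intros; apply H; lia. apply H; lia.
Qed.

Lemma deriv_term e s y : -1 < y ->
  derivable_pt_lim (fun z => e * Rpower (1 + z) s) y (e * s * Rpower (1 + y) (s - 1)).
Proof.
  intros Hy.
  assert (H1 : derivable_pt_lim (fun z => 1 + z) y 1).
  { pose proof (derivable_pt_lim_plus (fun _ => 1) (fun z => z) y 0 1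
      (derivable_pt_lim_const 1 y) (derivable_pt_lim_id y)) as H. rewrite Rplus_0_l in H. exact H. }
  pose proof (derivable_pt_lim_comp (fun z => 1 + z) (fun z => Rpower z s) y _ _ H1
    (derivable_pt_lim_power (1 + y) s ltac:(lra))) as H2.
  unfold comp in H2.
  replace (e * s * Rpower (1 + y) (s - 1)) with (e * (s * Rpower (1 + y) (s - 1) * 1)) by ring.
  apply (derivable_pt_lim_scal (fun z => Rpower (1 + z) s) e). exact H2.
Qed.

Lemma falling_S s k : falling s (S k) = s * falling (s - 1) k.
Proof.
  induction k.
  - simpl. ring.
  - change (falling s (S (S k))) with (falling s (S k) * (s - INR (S k))).
    rewrite IHk. simpl falling. rewrite S_INR. ring.
Qed.

Lemma DER k : forall n (e s : nat -> R) f g,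
  (forall y, -1 < y < 1 -> f y = sum_f_R0 (fun m => e m * Rpower (1 + y) (s m)) n) ->
  (forall y, -1 < y < 1 -> g y = sum_f_R0 (fun m => e m * falling (s m) k * Rpower (1 + y) (s m - INR k)) n) ->
  has_nth_deriv_on k f g.
Proof.
  induction k; intros n e s f g Hf Hg.
  - simpl. intros y Hy. rewrite Hf, Hg by auto. apply sum_eq. intros. simpl.
    rewrite Rminus_0_r. ring.
  - simpl has_nth_deriv_on.
    exists (fun y => sum_f_R0 (fun m => e m * s m * Rpower (1 + y) (s m - 1)) n). split.
    + intros y Hy. apply loc_deriv with (fun z => sum_f_R0 (fun m => e m * Rpower (1 + z) (s m)) n); auto.
      apply (deriv_sum (fun m z => e m * Rpower (1 + z) (s m)) (fun m z => e m * s m * Rpower (1 + z) (s m - 1))).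
      intros; apply deriv_term; lra.
    + apply (IHk n (fun m => e m * s m) (fun m => s m - 1)).
      * intros; reflexivity.
      * intros y Hy. rewrite Hg by auto. apply sum_eq. intros i Hi.
        rewrite falling_S, S_INR. replace (s i - (INR k + 1)) with (s i - 1 - INR k) by ring. ring.
Qed.

Definition fG (mu t : R) := Rpower t (mu - 1) * exp (- t).

Lemma D_Rpw s t : 0 < t -> derivable_pt_lim (fun t => Rpower t s) t (s * Rpower t (s - 1)).
Proof. intros; apply derivable_pt_lim_power; auto. Qed.

Lemma cont_of_deriv f t l : derivable_pt_lim f t l -> continuous f t.
Proof.
  intros H. apply continuity_pt_filterlim. apply derivable_continuous_pt. exists l; auto.
Qed.

Lemma fG_deriv mu t : 0 < t -> exists l, derivable_pt_lim (fG mu) t l.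
Proof.
  intros Ht.
  assert (H1 : derivable_pt_lim (fun t => exp (- t)) t (exp (- t) * -1)).
  { pose proof (derivable_pt_lim_comp Ropp exp t (-1) (exp (- t))) as H.
    unfold comp in H. apply H.
    pose proof (derivable_pt_lim_opp id t 1 (derivable_pt_lim_id t)) as H'. exact H'.
    apply derivable_pt_lim_exp. }
  eexists. apply (derivable_pt_lim_mult (fun t => Rpower t (mu - 1)) (fun t => exp (- t))).
  apply D_Rpw; auto. exact H1.
Qed.

Lemma fG_cont mu t : 0 < t -> continuous (fG mu) t.
Proof. intros Ht. destruct (fG_deriv mu t Ht) as [l Hl]. eapply cont_of_deriv; eauto. Qed.

Lemma fG_ex mu a b : 0 < a -> a <= b -> ex_RInt (fG mu) a b.
Proof.
  intros Ha Hab. apply (@ex_RInt_continuous R_CompleteNormedModule). intros z Hz.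
  rewrite Rmin_left, Rmax_right in Hz by lra. apply fG_cont; lra.
Qed.

Lemma fG_pos mu t : 0 < fG mu t.
Proof. unfold fG. apply Rmult_lt_0_compat. apply Rpower_pos. apply exp_pos. Qed.

Lemma A_bound mu a : 0 < mu -> 0 < a <= 1 -> RInt (fG mu) a 1 <= / mu.
Proof.
  intros Hm Ha.
  assert (I : is_RInt (fun t => Rpower t (mu - 1)) a 1 ((fun t => Rpower t mu / mu) 1 - (fun t => Rpower t mu / mu) a)).
  { apply (is_RInt_derive (fun t => Rpower t mu / mu)).
    - intros z Hz. rewrite Rmin_left, Rmax_right in Hz by lra. apply is_derive_Reals.
      replace (Rpower z (mu - 1)) with (/ mu * (mu * Rpower z (mu - 1))) by (field; lra).
      apply derivable_pt_lim_ext with (fun t => / mu * Rpower t mu). intros; unfold Rdiv; ring.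
      apply (derivable_pt_lim_scal (fun t => Rpower t mu)). apply D_Rpw; lra.
    - intros z Hz. rewrite Rmin_left, Rmax_right in Hz by lra.
      eapply cont_of_deriv. apply D_Rpw; lra. }
  apply Rle_trans with ((fun t => Rpower t mu / mu) 1 - (fun t => Rpower t mu / mu) a).
  - rewrite <- (is_RInt_unique _ _ _ _ I). apply RInt_le; try lra.
    apply fG_ex; lra. eexists; eauto.
    intros t Ht. unfold fG. pose proof (Rpower_pos t (mu - 1)).
    assert (exp (- t) <= 1) by (rewrite <- exp_0; left; apply exp_increasing; lra). nra.
  - simpl. pose proof (Rpower_pos a mu). replace (Rpower 1 mu) with 1 by (unfold Rpower; rewrite ln_1, Rmult_0_r, exp_0; auto).
    unfold Rdiv. assert (0 < / mu) by (apply Rinv_0_lt_compat; lra). nra.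
Qed.

Lemma Rpower_base1 y : Rpower 1 y = 1.
Proof. unfold Rpower; rewrite ln_1, Rmult_0_r, exp_0; auto. Qed.

Lemma exp_lower t n : 0 <= t -> t ^ (S n) / INR (Factorial.fact (S n)) <= exp t.
Proof.
  intros Ht. eapply Rle_trans; [|apply (exp_ge_taylor t (S n) Ht)].
  rewrite tech5. assert (0 <= sum_f_R0 (fun k => t ^ k / INR (Factorial.fact k)) n).
  { apply cond_pos_sum. intros k. apply Rmult_le_pos. apply pow_le; auto.
    left; apply Rinv_0_lt_compat, lt_0_INR, Factorial.lt_O_fact. }
  lra.
Qed.

Lemma fG_upper mu n t : 1 <= t -> INR (S n) >= mu + 1 ->
  fG mu t <= INR (Factorial.fact (S n)) * Rpower t (-1 - 1).
Proof.
  intros Ht Hn. set (F := INR (Factorial.fact (S n))).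
  assert (HF : 0 < F) by (apply lt_0_INR, Factorial.lt_O_fact).
  assert (Hp : 0 < t ^ S n) by (apply pow_lt; lra).
  assert (E1 : exp (- t) <= F / t ^ S n).
  { rewrite exp_Ropp. replace (F / t ^ S n) with (/ (t ^ S n / F)) by (field; lra).
    apply Rinv_le_contravar. apply Rdiv_lt_0_compat; auto. apply exp_lower; lra. }
  unfold fG. pose proof (Rpower_pos t (mu - 1)).
  apply Rle_trans with (Rpower t (mu - 1) * (F / t ^ S n)).
  apply Rmult_le_compat_l; lra.
  rewrite <- (Rpower_pow (S n) t) by lra.
  replace (Rpower t (mu - 1) * (F / Rpower t (INR (S n)))) with
     (F * Rpower t (mu - 1 + - INR (S n))).
  2:{ rewrite Rpower_plus, Rpower_Ropp. unfold Rdiv. ring. }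
  apply Rmult_le_compat_l; [lra|]. apply Rle_Rpower; lra.
Qed.

Lemma B_bound mu n b : 1 <= b -> INR (S n) >= mu + 1 ->
  RInt (fG mu) 1 b <= INR (Factorial.fact (S n)).
Proof.
  intros Hb Hn. set (F := INR (Factorial.fact (S n))).
  assert (HF : 0 < F) by (apply lt_0_INR, Factorial.lt_O_fact).
  assert (I : is_RInt (fun t => F * Rpower t (-1 - 1)) 1 b
     ((fun t => - F * Rpower t (-1)) b - (fun t => - F * Rpower t (-1)) 1)).
  { apply (is_RInt_derive (fun t => - F * Rpower t (-1))).
    - intros z Hz. rewrite Rmin_left, Rmax_right in Hz by lra. apply is_derive_Reals.
      replace (F * Rpower z (-1 - 1)) with (- F * (-1 * Rpower z (-1 - 1))) by ring.
      apply (derivable_pt_lim_scal (fun t => Rpower t (-1))). apply D_Rpw; lra.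
    - intros z Hz. rewrite Rmin_left, Rmax_right in Hz by lra.
      eapply cont_of_deriv. apply (derivable_pt_lim_scal (fun t => Rpower t (-1 - 1))). apply D_Rpw; lra. }
  destruct (Rle_lt_or_eq_dec 1 b Hb) as [Hb'|Hb'].
  2:{ subst b. rewrite RInt_point. unfold zero; simpl. lra. }
  apply Rle_trans with ((fun t => - F * Rpower t (-1)) b - (fun t => - F * Rpower t (-1)) 1).
  - rewrite <- (is_RInt_unique _ _ _ _ I). apply RInt_le; try lra.
    apply fG_ex; lra. eexists; eauto.
    intros t Ht. apply fG_upper; lra.
  - simpl. rewrite Rpower_base1. pose proof (Rpower_pos b (-1)). nra.
Qed.

Lemma RInt_split mu a b c : 0 < a -> a <= b -> b <= c ->
  RInt (fG mu) a c = RInt (fG mu) a b + RInt (fG mu) b c.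
Proof.
  intros. rewrite <- (RInt_Chasles (fG mu) a b c). reflexivity.
  apply fG_ex; lra. apply fG_ex; lra.
Qed.

Lemma RInt_nonneg mu a b : 0 < a -> a <= b -> 0 <= RInt (fG mu) a b.
Proof.
  intros. apply RInt_ge_0; auto. apply fG_ex; auto. intros; left; apply fG_pos.
Qed.

Lemma to_Riemann mu a b : 0 < a -> a <= b ->
  exists pr : Riemann_integrable (fun t => Rpower t (mu - 1) * exp (- t)) a b,
    RiemannInt pr = RInt (fG mu) a b.
Proof.
  intros. exists (ex_RInt_Reals_0 _ _ _ (fG_ex mu a b H H0)).
  rewrite <- RInt_Reals. reflexivity.
Qed.

Lemma Gamma_exists mu : 0 < mu -> exists g, Gamma_is mu g.
Proof.
  intros Hm. destruct (INR_unbounded (mu + 1)) as [n Hn].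
  assert (Hn' : INR (S n) >= mu + 1) by (rewrite S_INR; pose proof (pos_INR n); lra).
  set (EA := fun v => exists a, 0 < a <= 1 /\ v = RInt (fG mu) a 1).
  set (EB := fun v => exists b, 1 <= b /\ v = RInt (fG mu) 1 b).
  destruct (completeness EA) as [SA HA].
  { exists (/ mu). intros v [a [Ha ->]]. apply A_bound; auto. }
  { exists (RInt (fG mu) 1 1). exists 1. split; auto; lra. }
  destruct (completeness EB) as [SB HB].
  { exists (INR (Factorial.fact (S n))). intros v [b [Hb ->]]. apply (B_bound mu n); auto. }
  { exists (RInt (fG mu) 1 1). exists 1. split; auto; lra. }
  exists (SA + SB). intros eps He.
  assert (XA : exists a0, 0 < a0 <= 1 /\ RInt (fG mu) a0 1 > SA - eps / 2).
  { destruct (classic (exists a0, 0 < a0 <= 1 /\ RInt (fG mu) a0 1 > SA - eps / 2)) as [H|H]; auto.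
    exfalso. assert (SA <= SA - eps / 2); [|lra].
    apply HA. intros v [a [Ha ->]]. apply Rnot_gt_le. intro Hc. apply H. exists a; auto. }
  assert (XB : exists b0, 1 <= b0 /\ RInt (fG mu) 1 b0 > SB - eps / 2).
  { destruct (classic (exists b0, 1 <= b0 /\ RInt (fG mu) 1 b0 > SB - eps / 2)) as [H|H]; auto.
    exfalso. assert (SB <= SB - eps / 2); [|lra].
    apply HB. intros v [b [Hb ->]]. apply Rnot_gt_le. intro Hc. apply H. exists b; auto. }
  destruct XA as [a0 [Ha0 Ka]]. destruct XB as [b0 [Hb0 Kb]].
  exists a0. split; [lra|]. exists b0. intros a b Ha Hb.
  destruct (to_Riemann mu a b) as [pr Hpr]; try lra. exists pr. rewrite Hpr.
  rewrite (RInt_split mu a 1 b) by lra.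
  assert (RInt (fG mu) a 1 <= SA) by (apply HA; exists a; split; auto; lra).
  assert (RInt (fG mu) 1 b <= SB) by (apply HB; exists b; split; auto; lra).
  assert (RInt (fG mu) a0 1 <= RInt (fG mu) a 1).
  { rewrite (RInt_split mu a a0 1) by lra. pose proof (RInt_nonneg mu a a0). lra. }
  assert (RInt (fG mu) 1 b0 <= RInt (fG mu) 1 b).
  { rewrite (RInt_split mu 1 b0 b) by lra. pose proof (RInt_nonneg mu b0 b). lra. }
  apply Rabs_def1; lra.
Qed.

Lemma Gamma_is_pos mu g : Gamma_is mu g -> 0 < g.
Proof.
  intros H.
  assert (P : 0 < RInt (fG mu) 1 2).
  { apply RInt_gt_0; try lra. intros; apply fG_pos. intros; apply fG_cont; lra. }
  destruct (H (RInt (fG mu) 1 2 / 2) ltac:(lra)) as [d [Hd [M HM]]].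
  set (a := Rmin d 1 / 2). set (b := Rmax M 2 + 1).
  assert (0 < a < d /\ a <= 1).
  { unfold a. pose proof (Rmin_l d 1). pose proof (Rmin_r d 1).
    assert (0 < Rmin d 1) by (apply Rmin_pos; lra). lra. }
  assert (M < b /\ 2 <= b).
  { unfold b. pose proof (Rmax_l M 2). pose proof (Rmax_r M 2). lra. }
  destruct (HM a b ltac:(lra) ltac:(lra)) as [pr Hpr].
  destruct (to_Riemann mu a b) as [pr' Hpr']; try lra.
  rewrite (RiemannInt_P5 pr pr'), Hpr' in Hpr.
  rewrite (RInt_split mu a 1 b), (RInt_split mu 1 2 b) in Hpr by lra.
  pose proof (RInt_nonneg mu a 1). pose proof (RInt_nonneg mu 2 b).
  apply Rabs_def2 in Hpr. lra.
Qed.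

Lemma Gamma_pos mu : 0 < mu -> 0 < Gamma mu.
Proof.
  intros Hm. apply (Gamma_is_pos mu). unfold Gamma. apply epsilon_spec.
  apply Gamma_exists; auto.
Qed.

Lemma dpow f n y l : derivable_pt_lim f y l ->
  derivable_pt_lim (fun x => f x ^ n) y (INR n * f y ^ pred n * l).
Proof.
  intros H. pose proof (derivable_pt_lim_comp f (fun z => z ^ n) y l _ H (derivable_pt_lim_pow (f y) n)).
  unfold comp in H0. exact H0.
Qed.

Lemma da y : derivable_pt_lim (fun x => (x - 1) / 2) y (/ 2).
Proof. apply is_derive_Reals. auto_derive; auto. field. Qed.
Lemma db y : derivable_pt_lim (fun x => (x + 1) / 2) y (/ 2).
Proof. apply is_derive_Reals. auto_derive; auto. field. Qed.

Definition Kc N a b s := gbinom (INR N + a) (N - s) * gbinom (INR N + b) s.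

Definition DJ N a b y := sum_f_R0 (fun s => Kc N a b s *
   (INR s * ((y - 1) / 2) ^ pred s * / 2 * ((y + 1) / 2) ^ (N - s)
    + ((y - 1) / 2) ^ s * (INR (N - s) * ((y + 1) / 2) ^ pred (N - s) * / 2))) N.

Lemma jac_deriv N a b y : derivable_pt_lim (jacobiP N a b) y (DJ N a b y).
Proof.
  unfold jacobiP, DJ.
  apply (deriv_sum (fun s y => gbinom (INR N + a) (N - s) * gbinom (INR N + b) s *
     ((y - 1) / 2) ^ s * ((y + 1) / 2) ^ (N - s))
     (fun s y => Kc N a b s *
   (INR s * ((y - 1) / 2) ^ pred s * / 2 * ((y + 1) / 2) ^ (N - s)
    + ((y - 1) / 2) ^ s * (INR (N - s) * ((y + 1) / 2) ^ pred (N - s) * / 2)))).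
  intros s Hs. unfold Kc.
  apply derivable_pt_lim_ext with (fun y => gbinom (INR N + a) (N - s) * gbinom (INR N + b) s *
     (((y - 1) / 2) ^ s * ((y + 1) / 2) ^ (N - s))).
  { intros; ring. }
  apply (derivable_pt_lim_scal (fun y => ((y - 1) / 2) ^ s * ((y + 1) / 2) ^ (N - s))).
  apply (derivable_pt_lim_mult (fun y => ((y - 1) / 2) ^ s) (fun y => ((y + 1) / 2) ^ (N - s))).
  apply (dpow (fun x => (x - 1) / 2)). apply da.
  apply (dpow (fun x => (x + 1) / 2)). apply db.
Qed.

Lemma falling_pos z m : (forall j, (j < m)%nat -> 0 < z - INR j) -> 0 < falling z m.
Proof.
  induction m; intros H; simpl. lra.
  apply Rmult_lt_0_compat. apply IHm; intros; apply H; lia. apply H; lia.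
Qed.

Lemma gbinom_pos z m : (forall j, (j < m)%nat -> 0 < z - INR j) -> 0 < gbinom z m.
Proof.
  intros H. unfold gbinom. apply Rdiv_lt_0_compat. apply falling_pos; auto.
  apply lt_0_INR, Factorial.lt_O_fact.
Qed.

Lemma Kc_pos N a b s : -1 < a -> -1 < b -> (s <= N)%nat -> 0 < Kc N a b s.
Proof.
  intros Ha Hb Hs. unfold Kc. apply Rmult_lt_0_compat; apply gbinom_pos; intros j Hj.
  - assert (INR j + INR s + 1 <= INR N).
    { assert (H1 : INR (j + s + 1) <= INR N) by (apply le_INR; lia).
      rewrite !plus_INR in H1. simpl in H1. exact H1. }
    pose proof (pos_INR s). lra.
  - assert (INR j + 1 <= INR N).
    { assert (H1 : INR (j + 1) <= INR N) by (apply le_INR; lia).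
      rewrite !plus_INR in H1. simpl in H1. exact H1. }
    lra.
Qed.

Lemma pow_neg A n : (- A) ^ n = (-1) ^ n * A ^ n.
Proof. rewrite <- Rpow_mult_distr. f_equal. ring. Qed.

Lemma sum_nonneg_le (T : nat -> R) n : (forall s, (s <= n)%nat -> 0 <= T s) -> 0 <= sum_f_R0 T n.
Proof.
  induction n; intros H; simpl. apply H; lia.
  pose proof (H (S n) (le_n _)). assert (0 <= sum_f_R0 T n) by (apply IHn; intros; apply H; lia). lra.
Qed.

Lemma DJ_nonzero N a b y : (1 <= N)%nat -> -1 < a -> -1 < b -> y < -1 -> DJ N a b y <> 0.
Proof.
  intros HN Ha Hb Hy. set (A := (1 - y) / 2). set (B := - (y + 1) / 2).
  assert (HA : 0 < A) by (unfold A; lra). assert (HB : 0 < B) by (unfold B; lra).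
  set (T := fun s => Kc N a b s * (INR s * A ^ pred s * / 2 * B ^ (N - s)
          + A ^ s * (INR (N - s) * B ^ pred (N - s) * / 2))).
  assert (E : DJ N a b y = (-1) ^ (N - 1) * sum_f_R0 T N).
  { unfold DJ. rewrite scal_sum. apply sum_eq. intros s Hs. unfold T.
    replace ((y - 1) / 2) with (- A) by (unfold A; field).
    replace ((y + 1) / 2) with (- B) by (unfold B; field).
    rewrite !pow_neg.
    destruct s as [|s'].
    - simpl. replace (N - 0)%nat with N by lia.
      destruct N as [|N']; [lia|]. simpl pred. replace (S N' - 1)%nat with N' by lia. ring.
    - simpl pred. destruct (N - S s')%nat eqn:EN.
      + simpl. replace (N - 1)%nat with s' by lia. ring.
      + simpl pred. replace (N - 1)%nat with (s' + S n)%nat by lia.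
        rewrite pow_add. replace (S s') with (s' + 1)%nat by lia.
        replace (S n) with (n + 1)%nat by lia. rewrite !pow_add. simpl. ring. }
  rewrite E. apply Rmult_integral_contrapositive. split.
  - apply pow_nonzero; lra.
  - assert (Tnn : forall s, (s <= N)%nat -> 0 <= T s).
    { intros s Hs. unfold T. apply Rmult_le_pos. left; apply Kc_pos; auto.
      pose proof (pos_INR s). pose proof (pos_INR (N - s)).
      pose proof (pow_le A (pred s) ltac:(lra)). pose proof (pow_le A s ltac:(lra)).
      pose proof (pow_le B (N - s) ltac:(lra)). pose proof (pow_le B (pred (N - s)) ltac:(lra)).
      apply Rplus_le_le_0_compat; repeat apply Rmult_le_pos; lra. }
    destruct N as [|N']; [lia|]. rewrite tech5.
    assert (0 <= sum_f_R0 T N').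
    { apply sum_nonneg_le. intros; apply Tnn; lia. }
    assert (0 < T (S N')).
    { unfold T. apply Rmult_lt_0_compat. apply Kc_pos; auto.
      replace (S N' - S N')%nat with 0%nat by lia. simpl pred.
      pose proof (pow_lt A N' HA). pose proof (lt_0_INR (S N') ltac:(lia)). simpl INR at 2. rewrite !Rmult_0_l, !Rmult_0_r, Rplus_0_r, Rmult_1_r.
      apply Rmult_lt_0_compat; [|lra]. apply Rmult_lt_0_compat; lra. }
    lra.
Qed.

Fixpoint Pr (m : nat) (r : R) : R := match m with O => r | S m' => r * Pr m' (r + 1) end.

Lemma Pr_pos m : forall r, 0 < r -> 0 < Pr m r.
Proof. induction m; intros r Hr; simpl; auto. apply Rmult_lt_0_compat; auto. apply IHm; lra. Qed.

Lemma PrS m : forall r, Pr (S m) r = Pr m r * (r + INR m + 1).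
Proof.
  induction m; intros r.
  - simpl. ring.
  - change (Pr (S (S m)) r) with (r * Pr (S m) (r + 1)). rewrite IHm.
    simpl Pr at 2. rewrite S_INR. ring.
Qed.

Lemma Sc_closed m : forall r, 0 < r -> Sc m r = INR (Factorial.fact m) / Pr m r.
Proof.
  induction m; intros r Hr.
  - simpl. field. lra.
  - simpl Sc. rewrite IHm, IHm by lra.
    pose proof (Pr_pos m r Hr). pose proof (Pr_pos m (r + 1) ltac:(lra)).
    assert (E1 : Pr (S m) r = r * Pr m (r + 1)) by reflexivity.
    pose proof (PrS m r) as E2.
    change (Factorial.fact (S m)) with (S m * Factorial.fact m)%nat.
    rewrite mult_INR, S_INR.
    apply Rmult_eq_reg_r with (Pr (S m) r). 2:{ pose proof (Pr_pos (S m) r Hr). lra. }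
    unfold Rdiv. rewrite Rmult_assoc, Rinv_l by (pose proof (Pr_pos (S m) r Hr); lra).
    rewrite Rmult_minus_distr_r. rewrite E1 at 2. rewrite E2 at 1.
    field. lra.
Qed.

Lemma Sc_pos m r : 0 < r -> 0 < Sc m r.
Proof.
  intros Hr. rewrite Sc_closed by auto. apply Rdiv_lt_0_compat.
  apply lt_0_INR, Factorial.lt_O_fact. apply Pr_pos; auto.
Qed.

Lemma SP_at_m1 n d : sum_f_R0 (fun m => d m * (1 + -1) ^ m) n = d 0%nat.
Proof. replace (1 + -1) with 0 by ring. apply sum_first0. Qed.

Lemma Ihat_add mu n f g y : 0 < mu -> -1 < y -> SP n f -> SP n g ->
  Ihat mu (fun z => f z + g z) y = Ihat mu f y + Ihat mu g y.
Proof.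
  intros Hm Hy [df Hf] [dg Hg].
  rewrite (Ihat_eval mu f df n y), (Ihat_eval mu g dg n y) by auto.
  rewrite (Ihat_eval mu _ (fun m => df m + dg m) n y); auto.
  rewrite <- plus_sum. apply sum_eq; intros. unfold Rdiv; ring.
  intros z. rewrite Hf, Hg, <- plus_sum. apply sum_eq; intros; ring.
Qed.

Lemma Ihat_scal mu n a f y : 0 < mu -> -1 < y -> SP n f ->
  Ihat mu (fun z => a * f z) y = a * Ihat mu f y.
Proof.
  intros Hm Hy [df Hf].
  rewrite (Ihat_eval mu f df n y) by auto.
  rewrite (Ihat_eval mu _ (fun m => a * df m) n y); auto.
  rewrite scal_sum. apply sum_eq; intros. unfold Rdiv; ring.
  intros z. rewrite Hf, scal_sum. apply sum_eq; intros; ring.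
Qed.

Lemma Ihat_comb mu N (h : nat -> R -> R) (c : nat -> R) y : 0 < mu -> -1 < y ->
  (forall j, (j <= N)%nat -> poly_deg_le N (h j)) ->
  forall n, (n <= N)%nat ->
  Ihat mu (fun z => sum_f_R0 (fun j => c j * h j z) n) y = sum_f_R0 (fun j => c j * Ihat mu (h j) y) n.
Proof.
  intros Hm Hy Hh n. induction n; intros Hn; simpl.
  - apply (Ihat_scal mu N); auto. apply PD_SP, Hh; lia.
  - rewrite (Ihat_add mu N); auto.
    + rewrite IHn by lia. f_equal. apply (Ihat_scal mu N); auto. apply PD_SP, Hh; lia.
    + apply PD_SP. apply PD_sum. intros i Hi. apply PD_scal, Hh; lia.
    + apply PD_SP. apply PD_scal, Hh; lia.
Qed.

Lemma delta_sum (a : nat -> R) n i : (i <= n)%nat ->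
  sum_f_R0 (fun j => a j * (if Nat.eqb i j then 1 else 0)) n = a i.
Proof.
  induction n; intros Hi; simpl.
  - replace i with 0%nat by lia. simpl. ring.
  - destruct (Nat.eq_dec i (S n)) as [->|Hne].
    + rewrite Nat.eqb_refl. rewrite sum_eq_R0. ring.
      intros j Hj. destruct (Nat.eqb_spec (S n) j); [lia|ring].
    + rewrite IHn by lia. destruct (Nat.eqb_spec i (S n)); [lia|ring].
Qed.

Lemma sum_f_conv N (G : nat -> R) : (1 <= N)%nat ->
  sum_f 1 N G = sum_f_R0 (fun j => if Nat.eqb j 0 then 0 else G j) N.
Proof.
  intros HN. unfold sum_f. rewrite (decomp_sum _ N) by lia. simpl. rewrite Rplus_0_l.
  replace (N - 1)%nat with (pred N) by lia. apply sum_eq. intros i _.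
  rewrite Nat.add_1_r. reflexivity.
Qed.

Lemma interp N (x : nat -> R) (h : nat -> R -> R) u :
  (forall i j, (i <= N)%nat -> (j <= N)%nat -> i <> j -> x i <> x j) ->
  (forall j, (j <= N)%nat -> poly_deg_le N (h j)) ->
  (forall i j, (i <= N)%nat -> (j <= N)%nat -> h j (x i) = if Nat.eqb i j then 1 else 0) ->
  poly_deg_le N u -> forall y, u y = sum_f_R0 (fun j => u (x j) * h j y) N.
Proof.
  intros Hd Hh Hdel Hu y.
  assert (forall y, u y - sum_f_R0 (fun j => u (x j) * h j y) N = 0).
  { apply (roots_zero N _ x); auto.
    - apply PD_ext with (fun y => u y + (-1) * sum_f_R0 (fun j => u (x j) * h j y) N).
      intros; ring. apply PD_plus; auto. apply PD_scal. apply PD_sum. intros; apply PD_scal; auto.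
    - intros i Hi. rewrite (sum_eq _ (fun j => u (x j) * (if Nat.eqb i j then 1 else 0))).
      rewrite delta_sum; auto; ring. intros j Hj. rewrite Hdel; auto. }
  specialize (H y). lra.
Qed.

Lemma poly_eq_at_m1 N p q : poly_deg_le N p -> poly_deg_le N q ->
  (forall y, -1 < y < 1 -> p y = q y) -> p (-1) = q (-1).
Proof.
  intros Hp Hq H.
  assert (forall y, p y - q y = 0).
  { apply (roots_zero N _ (fun i => / (INR i + 2))).
    - apply PD_ext with (fun y => p y + (-1) * q y). intros; ring.
      apply PD_plus; auto. apply PD_scal; auto.
    - intros i Hi. pose proof (pos_INR i).
      assert (0 < / (INR i + 2) < 1).
      { split. apply Rinv_0_lt_compat; lra. rewrite <- Rinv_1. apply Rinv_lt_contravar; lra. }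
      rewrite H; [ring|lra].
    - intros i j _ _ Hij E. apply Hij. pose proof (pos_INR i). pose proof (pos_INR j).
      apply INR_eq. assert (INR i + 2 = INR j + 2).
      { rewrite <- (Rinv_inv (INR i + 2)), <- (Rinv_inv (INR j + 2)), E; auto. }
      lra. }
  specialize (H0 (-1)). lra.
Qed.

Theorem lemma3p2 (N : nat) (alpha beta : R) (x : nat -> R) (dP : R -> R)
    (h : nat -> R -> R) :
  (1 <= N)%nat -> -1 < alpha -> -1 < beta ->
  (forall y, derivable_pt_lim (jacobiP N alpha beta) y (dP y)) ->
  (forall i, (i < N)%nat -> x i < x (S i)) ->
  (forall y, (1 - y ^ 2) * dP y = 0 <-> exists j, (j <= N)%nat /\ y = x j) ->
  (forall j, (j <= N)%nat -> poly_deg_le N (h j)) ->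
  (forall i j, (i <= N)%nat -> (j <= N)%nat ->
     h j (x i) = if Nat.eqb i j then 1 else 0) ->
  forall mu, 0 < mu ->
  (forall u, poly_deg_le N u ->
     (exists p, poly_deg_le N p /\
        forall y, -1 < y < 1 -> Ihat mu u y = p y) /\
     (forall k : nat, INR k - 1 < mu < INR k ->
        exists p, poly_deg_le N p /\
          has_nth_deriv_on k (I_minus (INR k - mu) u)
                             (fun y => Rpower (1 + y) (- mu) * p y))) /\
  (forall phi, poly_deg_le N phi ->
     (phi (-1) = 0 <->
      exists c : nat -> R, forall y, -1 < y < 1 ->
        phi y = sum_f 1 N (fun j => c j * Ihat mu (h j) y))) /\
  (forall c : nat -> R, exists phi, poly_deg_le N phi /\ phi (-1) = 0 /\
     forall y, -1 < y < 1 -> phi y = sum_f 1 N (fun j => c j * Ihat mu (h j) y)).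
Proof.
  intros HN Ha Hb HdP Hinc Hz Hh Hdel mu Hmu.
  assert (Hmono : forall i j, (i <= j)%nat -> (j <= N)%nat -> x i <= x j).
  { intros i j Hij. induction Hij; intros HjN. lra.
    specialize (IHHij ltac:(lia)). specialize (Hinc m ltac:(lia)). lra. }
  assert (Hstrict : forall i j, (i < j)%nat -> (j <= N)%nat -> x i < x j).
  { intros i j Hij HjN. pose proof (Hinc i ltac:(lia)). pose proof (Hmono (S i) j Hij HjN). lra. }
  assert (Hdist : forall i j, (i <= N)%nat -> (j <= N)%nat -> i <> j -> x i <> x j).
  { intros i j Hi Hj Hij E. destruct (Nat.lt_gt_cases i j) as [[L|L] _]; auto.
    pose proof (Hstrict i j L Hj); lra. pose proof (Hstrict j i L Hi); lra. }
  assert (Hx0 : x 0%nat = -1).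
  { destruct (proj1 (Hz (-1)) ltac:(ring)) as [j [Hj Ej]].
    pose proof (Hmono 0%nat j ltac:(lia) Hj).
    destruct (Rle_lt_or_eq_dec (x 0%nat) (-1)) as [L|]; [lra| |auto].
    exfalso. assert (Z : (1 - x 0%nat ^ 2) * dP (x 0%nat) = 0).
    { apply Hz. exists 0%nat; split; auto; lia. }
    apply Rmult_integral in Z. destruct Z as [Z|Z].
    - simpl in Z. nra.
    - apply (DJ_nonzero N alpha beta (x 0%nat)); auto.
      rewrite <- Z. apply (uniqueness_limite (jacobiP N alpha beta) (x 0%nat)); auto.
      apply jac_deriv. }
  set (lam := fun m => Sc m mu / Gamma mu).
  assert (Hlam : forall m, lam m <> 0).
  { intros m. unfold lam. pose proof (Sc_pos m mu Hmu). pose proof (Gamma_pos mu Hmu).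
    apply Rgt_not_eq. apply Rdiv_lt_0_compat; auto. }
  assert (Heval : forall u d y, -1 < y -> (forall z, u z = sum_f_R0 (fun m => d m * (1 + z) ^ m) N) ->
     Ihat mu u y = sum_f_R0 (fun m => d m * lam m * (1 + y) ^ m) N).
  { intros u d y Hy Hu. rewrite (Ihat_eval mu u d N y Hmu Hy Hu). apply sum_eq; intros.
    unfold lam, Rdiv; ring. }
  assert (Hcomb : forall c : nat -> R, exists p, poly_deg_le N p /\ p (-1) = 0 /\
     forall y, -1 < y < 1 -> p y = sum_f 1 N (fun j => c j * Ihat mu (h j) y)).
  { intros c. set (c' := fun j => if Nat.eqb j 0 then 0 else c j).
    set (Psi := fun z => sum_f_R0 (fun j => c' j * h j z) N).
    assert (HPsi : poly_deg_le N Psi).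
    { apply PD_sum. intros; apply PD_scal; auto. }
    destruct (PD_SP N Psi HPsi) as [d Hd].
    exists (fun y => sum_f_R0 (fun m => d m * lam m * (1 + y) ^ m) N). split; [|split].
    - apply SP_PD. exists (fun m => d m * lam m). auto.
    - replace (sum_f_R0 (fun m => d m * lam m * (1 + -1) ^ m) N) with (d 0%nat * lam 0%nat).
      2:{ rewrite <- (SP_at_m1 N (fun m => d m * lam m)). reflexivity. }
      assert (d 0%nat = 0).
      { rewrite <- (SP_at_m1 N d), <- Hd. unfold Psi.
        rewrite <- Hx0. rewrite (sum_eq _ (fun j => c' j * (if Nat.eqb 0 j then 1 else 0))).
        rewrite delta_sum by lia. reflexivity.
        intros j Hj. rewrite Hdel; auto; lia. }
      rewrite H; ring.
    - intros y Hy. rewrite <- (Heval Psi d y) by (auto; lra).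
      unfold Psi. rewrite (Ihat_comb mu N h c' y Hmu ltac:(lra) Hh N (le_n _)).
      rewrite sum_f_conv by auto. apply sum_eq. intros j _. unfold c'.
      destruct (Nat.eqb j 0); ring. }
  split; [|split].
  -
    intros u Hu. destruct (PD_SP N u Hu) as [d Hd]. split.
    + exists (fun y => sum_f_R0 (fun m => d m * lam m * (1 + y) ^ m) N). split.
      * apply SP_PD. exists (fun m => d m * lam m). auto.
      * intros y Hy. apply Heval; auto; lra.
    + intros k Hk. set (r := INR k - mu).
      assert (Hr : 0 < r) by (unfold r; lra).
      set (e := fun m => / Gamma r * (d m * Sc m r)).
      exists (fun y => sum_f_R0 (fun m => e m * falling (r + INR m) k * (1 + y) ^ m) N). split.
      * apply SP_PD. exists (fun m => e m * falling (r + INR m) k). auto.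
      * apply (DER k N e (fun m => r + INR m)).
        -- intros y Hy. rewrite (Imin_eval r u d N y Hr ltac:(lra) Hd).
           rewrite scal_sum. apply sum_eq. intros. unfold e. ring.
        -- intros y Hy. rewrite scal_sum. apply sum_eq. intros m _.
           replace (r + INR m - INR k) with (- mu + INR m) by (unfold r; ring).
           rewrite Rpower_plus, Rpower_pow by lra. ring.
  - intros phi Hphi. split.
    + intros H0. destruct (PD_SP N phi Hphi) as [e He].
      set (u := fun z => sum_f_R0 (fun m => e m / lam m * (1 + z) ^ m) N).
      assert (Hu : poly_deg_le N u) by (apply SP_PD; exists (fun m => e m / lam m); auto).
      assert (Hu0 : u (x 0%nat) = 0).
      { rewrite Hx0. unfold u. rewrite (SP_at_m1 N (fun m => e m / lam m)).
        rewrite He, SP_at_m1 in H0. rewrite H0. unfold Rdiv; ring. }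
      exists (fun j => u (x j)). intros y Hy.
      rewrite sum_f_conv by auto.
      rewrite (sum_eq _ (fun j => u (x j) * Ihat mu (h j) y)).
      2:{ intros j _. destruct (Nat.eqb_spec j 0); auto. subst j. rewrite Hu0; ring. }
      rewrite <- (Ihat_comb mu N h (fun j => u (x j)) y Hmu ltac:(lra) Hh N (le_n _)).
      replace (fun z => sum_f_R0 (fun j => u (x j) * h j z) N) with u.
      2:{ apply functional_extensionality. intro z. apply (interp N x h u); auto. }
      rewrite (Heval u (fun m => e m / lam m) y) by (auto; lra).
      rewrite He. apply sum_eq. intros m _. field. auto.
    + intros [c Hc]. destruct (Hcomb c) as [p [Hp [Hp0 Hpc]]].
      rewrite <- Hp0. apply (poly_eq_at_m1 N); auto.
      intros y Hy. rewrite Hc, Hpc; auto.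
  - exact Hcomb.
Qed.
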